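(* Let $t \ge 2$ be an integer and let $M$ be a matroid with the $(t,2t)$-property. If $M$ has a $t$-echidna $(S_1,\ldots, S_n)$ with $n\geq 4t-3$, then there exist $m\ge n$ and pairs $S_{n+1},\dots,S_m$ such that $(S_1,\ldots,S_n,S_{n+1},\dots,S_m)$ is a partition of $E(M)$ that is both a $t$-echidna and a $t$-coechidna of $M$.
   Context: A matroid $M$ has the $(t,2t)$-property if every $t$-element subset of $E(M)$ is contained in both a $2t$-element circuit and a $2t$-element cocircuit of $M$. A $t$-echidna of order $n$ of $M$ is a partition $(S_1,\ldots,S_n)$ of a subset of $E(M)$ such that $|S_i|=2$ for all $i\in\{1,\dots,n\}$, and $\bigcup_{i\in I}S_i$ is a circuit of $M$ for every $I\subseteq\{1,\dots,n\}$ with $|I|=t$. A $t$-coechidna of $M$ is a $t$-echidna of the dual matroid $M^*$. *)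

(* Defs.v *)
(* Finite matroids on a finType T, ground set E(M) = [set: T]. *)
From mathcomp Require Import all_boot.
Set Implicit Arguments. Unset Strict Implicit. Unset Printing Implicit Defensive.

Record matroid (T : finType) := Matroid {
  indep : {set T} -> bool;
  indep0 : indep set0;
  indep_sub : forall X Y : {set T}, X \subset Y -> indep Y -> indep X;
  indep_aug : forall X Y : {set T}, indep X -> indep Y -> #|X| < #|Y| ->
     exists2 y, y \in Y :\: X & indep (y |: X)
}.

Section MatroidDefs.
Variable T : finType.

Definition circuit_of (ind : {set T} -> bool) (C : {set T}) : Prop :=
  ~~ ind C /\ (forall D : {set T}, D \proper C -> ind D).

Definition circuit (M : matroid T) := circuit_of (indep M).

Definition basis (M : matroid T) (B : {set T}) : bool :=
  indep M B && [forall X : {set T}, (B \subset X) && indep M X ==> (X == B)].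

Definition dual_indep (M : matroid T) (X : {set T}) : bool :=
  [exists B : {set T}, [disjoint X & B] && basis M B].

Definition cocircuit (M : matroid T) := circuit_of (dual_indep M).

Definition t2t_property (M : matroid T) (t : nat) : Prop :=
  forall X : {set T}, #|X| = t ->
    (exists C : {set T}, [/\ X \subset C, #|C| = 2 * t & circuit M C]) /\
    (exists D : {set T}, [/\ X \subset D, #|D| = 2 * t & cocircuit M D]).

Definition echidna_of (circ : {set T} -> Prop) (t : nat) (s : seq {set T}) : Prop :=
  [/\ forall i, i < size s -> #|nth set0 s i| = 2,
      forall i j, i < size s -> j < size s -> i != j ->
        [disjoint nth set0 s i & nth set0 s j]
    & forall I : {set 'I_(size s)}, #|I| = t ->
        circ (\bigcup_(i in I) nth set0 s i)].

Definition echidna (M : matroid T) := echidna_of (circuit M).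
Definition coechidna (M : matroid T) := echidna_of (cocircuit M).

Definition covers_ground (s : seq {set T}) : Prop :=
  \bigcup_(S <- s) S = [set: T].

End MatroidDefs.

(* Main.v *)
Require Import Defs.
From mathcomp Require Import all_boot zify.
Set Implicit Arguments. Unset Strict Implicit. Unset Printing Implicit Defensive.

Lemma ext_max (T : finType) (M : matroid T) (A X : {set T}) :
  indep M X -> X \subset A -> exists I : {set T},
   [/\ X \subset I, I \subset A, indep M I &
       forall y, y \in A -> y \notin I -> ~~ indep M (y |: I)].
Proof.
move=> hX hXA.
have P0 : (X \subset X) && (X \subset A) && indep M X by rewrite subxx hXA hX.
case: (@arg_maxnP _ X (fun Y => (X \subset Y) && (Y \subset A) && indep M Y) (fun Y : {set T} => #|Y|) P0) => I /andP[/andP[h1 h2] h3] hmax.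
exists I; split => // y yA yI; apply/negP => hy.
have := hmax (y |: I); rewrite hy andbT (subset_trans h1 (subsetU1 y I)) /=.
by rewrite subUset sub1set yA h2 cardsU1 yI /= => /(_ isT); rewrite ltnn.
Qed.

Lemma max_basis (T : finType) (M : matroid T) (I : {set T}) :
  indep M I -> (forall y, y \notin I -> ~~ indep M (y |: I)) -> basis M I.
Proof.
move=> hI hm; rewrite /basis hI /=; apply/forallP => X; apply/implyP => /andP[hIX hX].
rewrite eq_sym eqEsubset hIX /=; apply/subsetP => y yX.
apply/negPn/negP => yI; have := hm y yI.
by rewrite (indep_sub _ hX) // subUset sub1set yX hIX.
Qed.

Lemma basis_card (T : finType) (M : matroid T) (B X : {set T}) :
  basis M B -> indep M X -> #|X| <= #|B|.
Proof.
move=> /andP[hB /forallP hm] hX; rewrite leqNgt; apply/negP => lt.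
case: (indep_aug hB hX lt) => y /setDP[yX yB] hy.
have := hm (y |: B); rewrite subsetU1 hy /= => /eqP e.
by move: yB; rewrite -e setU11.
Qed.

Lemma basis_indep (T : finType) (M : matroid T) (B : {set T}) : basis M B -> indep M B.
Proof. by case/andP. Qed.

Lemma orth (T : finType) (M : matroid T) (C D : {set T}) :
  circuit M C -> cocircuit M D -> #|C :&: D| != 1.
Proof.
move=> [hCd hCm] [hDd hDm]; apply/negP => /cards1P[x hx].
have xCD : x \in C :&: D by rewrite hx set11.
move: (xCD) => /setIP[xC xD].
have := hDm _ (properD1 xD) => /existsP[B /andP[dB bB]].
have iC := hCm _ (properD1 xC).
have sub : C :\ x \subset ~: D.
  apply/subsetP => y /setD1P[yx yC]; rewrite inE; apply/negP => yD.
  have : y \in C :&: D by rewrite inE yC yD.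
  by rewrite hx inE (negbTE yx).
case: (ext_max iC sub) => I [h1 h2 h3 h4].
case: (ltnP #|I| #|B|) => lt.
  case: (indep_aug h3 (basis_indep bB) lt) => y /setDP[yB yI] hy.
  case: (boolP (y \in D)) => yD.
    case: (eqVneq y x) => [eyx|nyx].
      subst y; move/negP: hCd; apply; apply: indep_sub hy.
      apply/subsetP => z zC; rewrite !inE; case: (eqVneq z x) => //= zx.
      by apply: (subsetP h1); rewrite !inE zx zC.
    move: dB; rewrite disjoints_subset => /subsetP /(_ y).
    by rewrite !inE nyx yD yB => /(_ isT).
  by move: (h4 y); rewrite inE yD yI hy => /(_ isT isT).
case: (@ext_max _ M setT I h3 (subsetT _)) => B' [g1 _ g3 g4].
have bB' : basis M B' by apply: max_basis => // y; apply: g4; rewrite inE.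
have cB' := basis_card bB g3.
have eI : I = B' by apply/eqP; rewrite eqEcard g1 (leq_trans cB' lt).
move/negP: hDd; apply; apply/existsP; exists I; rewrite eI bB' andbT.
by rewrite disjoint_sym disjoints_subset -eI.
Qed.


Definition U (T : finType) (S : nat -> {set T}) (J : seq nat) : {set T} :=
  [set x | has (fun j => x \in S j) J].
Definition pr (T : finType) n (S : nat -> {set T}) :=
  (forall i, i < n -> #|S i| = 2) /\
  (forall i j, i < n -> j < n -> i != j -> [disjoint S i & S j]).
Definition vld n k (J : seq nat) := [&& uniq J, size J == k & all (fun j => j < n) J].

Lemma U_cons (T : finType) (S : nat -> {set T}) j J : U S (j :: J) = S j :|: U S J.
Proof. by apply/setP => x; rewrite !inE. Qed.

Lemma disj_mem (T : finType) n (S : nat -> {set T}) i j x :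
  pr n S -> i < n -> j < n -> x \in S i -> x \in S j -> i = j.
Proof.
move=> [_ hd] hi hj xi xj; apply/eqP/negP => /negP nij.
by move: (hd _ _ hi hj nij); rewrite disjoints_subset => /subsetP /(_ x xi); rewrite inE xj.
Qed.

Lemma cardU (T : finType) n (S : nat -> {set T}) J :
  pr n S -> uniq J -> all (fun j => j < n) J -> #|U S J| = 2 * size J.
Proof.
move=> hp; elim: J => [|j J IH] /=.
  by move=> _ _; apply/eqP; rewrite cards_eq0; apply/eqP/setP => x; rewrite !inE.
move=> /andP[jJ uJ] /andP[jn aJ]; rewrite U_cons cardsU IH // hp.1 //.
suff -> : S j :&: U S J = set0 by rewrite cards0 subn0 mulnS.
apply/setP => x; rewrite !inE; apply/negP => /andP[xj /hasP[k kJ xk]].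
have kn : k < n by move/allP: aJ => /(_ k kJ).
by move: jJ; rewrite (disj_mem hp jn kn xj xk) kJ.
Qed.

Lemma count_bound (L : seq nat) n : n <= size [seq j <- iota 0 n | j \notin L] + size L.
Proof.
have := @uniq_leq_size _ (iota 0 n) ([seq j <- iota 0 n | j \notin L] ++ L) (iota_uniq 0 n).
rewrite size_cat size_iota; apply => j jn; rewrite mem_cat mem_filter jn andbT.
by case: (j \in L).
Qed.

Lemma comb (T : finType) t n (S : nat -> {set T}) (Z : {set T}) :
  pr n S -> 2 <= t -> 4 * t - 3 <= n -> #|Z| <= 2 * t ->
  (forall J, vld n t J -> #|U S J :&: Z| != 1) ->
  forall i, i < n -> #|Z :&: S i| != 1.
Proof.
move=> hp ht hn hZ hJ i hi; apply/negP => /eqP h1.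
have [x0 _] : exists x0, x0 \in Z :&: S i by apply/card_gt0P; rewrite h1.
pose Zs := [seq j <- iota 0 n | (j != i) && (#|Z :&: S j| == 0)].
pose NZ := [seq j <- iota 0 n | #|Z :&: S j| != 0].
have cov : n <= size Zs + size NZ.
  have := @uniq_leq_size _ (iota 0 n) (Zs ++ NZ) (iota_uniq 0 n).
  rewrite size_cat size_iota; apply => j jn; rewrite mem_cat !mem_filter jn !andbT.
  case: (eqVneq j i) => [->|]; first by rewrite h1 orbT.
  by case: (#|Z :&: S j| == 0).
pose rep j := odflt x0 [pick x in Z :&: S j].
have repP : forall j, #|Z :&: S j| != 0 -> rep j \in Z :&: S j.
  move=> j; rewrite /rep; case: pickP => //= h; rewrite cards_eq0 => /negP; case.
  by apply/eqP/setP => x; move: (h x) => /= ->; rewrite inE.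
have nzb : size NZ <= 2 * t.
  apply: leq_trans hZ.
  have uN : uniq (map rep NZ).
    rewrite map_inj_in_uniq ?filter_uniq ?iota_uniq //.
    move=> a b; rewrite !mem_filter !mem_iota /= => /andP[ha an] /andP[hb bn] e.
    have := repP a ha; have := repP b hb; rewrite e => /setIP[_ h2] /setIP[_ h3].
    exact: (disj_mem hp an bn h3 h2).
  rewrite -(size_map rep) -(card_uniqP uN) -cardsE; apply: subset_leq_card.
  apply/subsetP => y; rewrite inE => /mapP[a]; rewrite mem_filter => /andP[ha _] ->.
  by have /setIP[] := repP a ha.
have hZs : t - 1 <= size Zs by lia.
pose J := i :: take (t - 1) Zs.
have vJ : vld n t J.
  rewrite /vld /= size_takel // take_uniq ?filter_uniq ?iota_uniq // andbT.
  apply/and3P; split.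
  - apply/negP => /mem_take; rewrite mem_filter eqxx //.
  - apply/eqP; lia.
  - rewrite hi /=; apply/allP => j /mem_take; rewrite mem_filter mem_iota; lia.
move/eqP: (hJ J vJ); apply.
rewrite -h1; apply: eq_card => x; rewrite !inE /= andbC.
case: (boolP (x \in Z)) => //= xZ; case: (x \in S i); rewrite ?orbT ?orbF //.
apply/negP => /hasP[j /mem_take]; rewrite mem_filter => /andP[/andP[_ ]].
rewrite cards_eq0 => /eqP e _ xj; have : x \in Z :&: S j by rewrite inE xZ xj.
by rewrite e inE.
Qed.


Definition ech (T : finType) (P : {set T} -> Prop) t n (S : nat -> {set T}) :=
  forall J, vld n t J -> P (U S J).

Lemma full_meet (T : finType) n (S : nat -> {set T}) (Z : {set T}) j x :
  pr n S -> j < n -> #|Z :&: S j| != 1 -> x \in Z -> x \in S j -> S j \subset Z.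
Proof.
move=> hp jn h1 xZ xj.
have c0 : 0 < #|Z :&: S j| by apply/card_gt0P; exists x; rewrite inE xZ xj.
have c2 : #|Z :&: S j| <= 2 by rewrite -(hp.1 j jn); apply: subset_leq_card; apply: subsetIr.
have e : Z :&: S j == S j.
  by rewrite eqEcard subsetIr (hp.1 j jn); move: h1 c0 c2; clear; lia.
by rewrite -(eqP e) subsetIl.
Qed.

Definition rep (T : finType) (x0 : T) (S : nat -> {set T}) j := odflt x0 [pick x in S j].

Lemma rep_in (T : finType) (x0 : T) n (S : nat -> {set T}) j :
  pr n S -> j < n -> rep x0 S j \in S j.
Proof.
move=> hp jn; rewrite /rep; case: pickP => //= h.
by have := hp.1 j jn; rewrite (eq_card0 h).
Qed.

Lemma rep_card (T : finType) (x0 : T) n (S : nat -> {set T}) J :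
  pr n S -> uniq J -> all (fun j => j < n) J -> #|[set x in map (rep x0 S) J]| = size J.
Proof.
move=> hp uJ aJ; rewrite cardsE.
have u : uniq (map (rep x0 S) J).
  rewrite map_inj_in_uniq // => a b aJ' bJ' e.
  have an : a < n by move/allP: aJ => /(_ a aJ').
  have bn : b < n by move/allP: aJ => /(_ b bJ').
  have := rep_in x0 hp an; rewrite e => h; exact: (disj_mem hp an bn h (rep_in x0 hp bn)).
by rewrite (card_uniqP u) size_map.
Qed.

Lemma step1 (T : finType) (x0 : T) (P Q : {set T} -> Prop) t n (S : nat -> {set T}) :
  pr n S -> 2 <= t -> 4 * t - 3 <= n ->
  (forall X : {set T}, #|X| = t -> exists D : {set T}, [/\ X \subset D, #|D| = 2 * t & Q D]) ->
  (forall C D, P C -> Q D -> #|C :&: D| != 1) ->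
  ech P t n S -> ech Q t n S.
Proof.
move=> hp ht hn hQ hO hE J vJ; move/and3P: (vJ) => [uJ /eqP sJ aJ].
have [D [XD cD QD]] := hQ _ (etrans (rep_card x0 hp uJ aJ) sJ).
have hc := comb hp ht hn (eq_leq cD) (fun J' vJ' => hO _ _ (hE J' vJ') QD).
have sub : U S J \subset D.
  apply/subsetP => x; rewrite inE => /hasP[j jJ xj].
  have jn : j < n by move/allP: aJ => /(_ j jJ).
  have rD : rep x0 S j \in D by apply: (subsetP XD); rewrite inE map_f.
  by apply: (subsetP (full_meet hp jn (hc j jn) rD (rep_in x0 hp jn))).
suff -> : U S J = D by [].
by apply/eqP; rewrite eqEcard sub cD (cardU hp uJ aJ) sJ /=.
Qed.

Lemma step2 (T : finType) (x0 : T) (P Q : {set T} -> Prop) t n (S : nat -> {set T}) e I :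
  pr n S -> 2 <= t -> 4 * t - 3 <= n ->
  (forall X : {set T}, #|X| = t -> exists D : {set T}, [/\ X \subset D, #|D| = 2 * t & Q D]) ->
  (forall C D, P C -> Q D -> #|C :&: D| != 1) ->
  ech P t n S -> (forall k, k < n -> e \notin S k) -> vld n (t - 1) I ->
  exists f, [/\ f != e, forall k, k < n -> f \notin S k & Q (f |: (e |: U S I))].
Proof.
move=> hp ht hn hQ hO hE he vI; move/and3P: (vI) => [uI /eqP sI aI].
have eR : e \notin [set x in map (rep x0 S) I].
  rewrite inE; apply/negP => /mapP[j jI ej].
  have jn : j < n by move/allP: aI => /(_ j jI).
  by move: (he j jn); rewrite ej (rep_in x0 hp jn).
have cX : #|e |: [set x in map (rep x0 S) I]| = t.
  by rewrite cardsU1 eR (rep_card x0 hp uI aI) sI; lia.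
have [C [XC cC QC]] := hQ _ cX.
have hc := comb hp ht hn (eq_leq cC) (fun J' vJ' => hO _ _ (hE J' vJ') QC).
pose A := e |: U S I.
have sUI : U S I \subset C.
  apply/subsetP => x; rewrite inE => /hasP[j jI xj].
  have jn : j < n by move/allP: aI => /(_ j jI).
  have rD : rep x0 S j \in C by apply: (subsetP XC); rewrite !inE map_f ?orbT.
  by apply: (subsetP (full_meet hp jn (hc j jn) rD (rep_in x0 hp jn))).
have eC : e \in C by apply: (subsetP XC); rewrite !inE eqxx.
have eU : e \notin U S I.
  rewrite inE; apply/negP => /hasP[j jI xj].
  have jn : j < n by move/allP: aI => /(_ j jI).
  by move: (he j jn); rewrite xj.
have sA : A \subset C by rewrite subUset sub1set eC sUI.
have cA : #|A| = 2 * t - 1 by rewrite cardsU1 eU (cardU hp uI aI) sI; lia.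
have c1 : #|C :\: A| == 1.
  by rewrite cardsD (setIidPr sA) cC cA; lia.
case/cards1P: c1 => f hf.
have fC : f \in C :\: A by rewrite hf set11.
move: (fC) => /setDP[fC' fA].
have eqC : C = f |: A.
  apply/setP => x; rewrite in_setU1; case: (boolP (x \in A)) => xA.
    by rewrite (subsetP sA x xA) orbT.
  rewrite orbF; apply/idP/idP => [xC|/eqP -> //].
  have : x \in C :\: A by rewrite inE xA xC.
  by rewrite hf inE.
exists f; split.
- by apply/negP => /eqP fe; move: fA; rewrite !inE fe eqxx.
- move=> k kn; apply/negP => fk.
  have sk := full_meet hp kn (hc k kn) fC' fk.
  have kI : k \notin I.
    apply/negP => kI; move: fA; rewrite !inE negb_or => /andP[_ /hasPn /(_ k kI)]; by rewrite fk.
  have : S k \subset [set f].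
    apply/subsetP => y yk; rewrite -hf inE (subsetP sk y yk) andbT !inE negb_or.
    apply/andP; split.
      by apply/negP => /eqP ye; move: (he k kn); rewrite -ye yk.
    apply/negP => /hasP[j jI yj].
    have jn : j < n by move/allP: aI => /(_ j jI).
    by move: kI; rewrite (disj_mem hp kn jn yk yj) jI.
  by move/subset_leq_card; rewrite cards1 (hp.1 k kn).
- by rewrite -eqC.
Qed.


Lemma fg (T : finType) (P Q : {set T} -> Prop) n (S : nat -> {set T}) e f g I I' :
  pr n S -> (forall C D, P C -> Q D -> #|C :&: D| != 1) ->
  P (f |: (e |: U S I)) -> Q (g |: (e |: U S I')) ->
  f != e -> g != e -> (forall k, k < n -> f \notin S k) -> (forall k, k < n -> g \notin S k) ->
  all (fun j => j < n) I -> all (fun j => j < n) I' -> (forall j, j \in I -> j \notin I') ->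
  f = g.
Proof.
move=> hp hO hP hQ fe ge fS gS aI aI' dI; apply/eqP/negP => /negP fg.
move/negP: (hO _ _ hP hQ); apply; apply/cards1P; exists e.
apply/setP => x; rewrite !inE.
case: (eqVneq x e) => [->|xe]; first by rewrite ?eqxx ?orbT.
rewrite /=; apply/negP => /andP[/orP[/eqP xf|hx1] /orP[/eqP xg|hx2]].
- by move: fg; rewrite -xf xg eqxx.
- move/hasP: hx2 => [j jI' xj]; have jn : j < n by move/allP: aI' => /(_ j jI').
  by move: (fS j jn); rewrite -xf xj.
- move/hasP: hx1 => [j jI xj]; have jn : j < n by move/allP: aI => /(_ j jI).
  by move: (gS j jn); rewrite -xg xj.
- move/hasP: hx1 => [j jI xj]; have jn : j < n by move/allP: aI => /(_ j jI).
  move/hasP: hx2 => [k kI' xk]; have kn : k < n by move/allP: aI' => /(_ k kI').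
  by move: (dI j jI); rewrite (disj_mem hp jn kn xj xk) kI'.
Qed.

Lemma avoid n k (I1 I2 : seq nat) :
  size I1 + size I2 + k <= n ->
  exists I', [/\ vld n k I', forall j, j \in I1 -> j \notin I' & forall j, j \in I2 -> j \notin I'].
Proof.
move=> h; have := count_bound (I1 ++ I2) n.
set L := [seq j <- iota 0 n | j \notin I1 ++ I2]; rewrite size_cat => hL.
exists (take k L); split.
- rewrite /vld take_uniq ?filter_uniq ?iota_uniq // size_takel; last by move: h hL; clearbody L; move: (size L) (size I1) (size I2) => a b c; lia.
  rewrite eqxx /=; apply/allP => j /mem_take; rewrite mem_filter mem_iota; lia.
- move=> j jI; apply/negP => /mem_take; rewrite mem_filter mem_cat jI //.
- move=> j jI; apply/negP => /mem_take; rewrite mem_filter mem_cat jI orbT //.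
Qed.

Lemma ext_step (T : finType) (x0 : T) (M : matroid T) t n (S : nat -> {set T}) e :
  2 <= t -> t2t_property M t -> pr n S -> ech (circuit M) t n S -> 4 * t - 3 <= n ->
  (forall k, k < n -> e \notin S k) ->
  exists f, [/\ f != e, forall k, k < n -> f \notin S k &
     forall I, vld n (t - 1) I -> circuit M (f |: (e |: U S I))].
Proof.
move=> ht h2t hp hE hn he.
have hQc : forall X : {set T}, #|X| = t -> exists D : {set T}, [/\ X \subset D, #|D| = 2 * t & circuit M D].
  by move=> X hX; exact: (h2t X hX).1.
have hQd : forall X : {set T}, #|X| = t -> exists D : {set T}, [/\ X \subset D, #|D| = 2 * t & cocircuit M D].
  by move=> X hX; exact: (h2t X hX).2.
have hO1 : forall C D, circuit M C -> cocircuit M D -> #|C :&: D| != 1 by move=> C D; apply: orth.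
have hO2 : forall C D, cocircuit M C -> circuit M D -> #|C :&: D| != 1.
  by move=> C D hC hD; rewrite setIC; exact: (orth hD hC).
have hE' := step1 x0 hp ht hn hQd hO1 hE.
have vI0 : vld n (t - 1) (iota 0 (t - 1)).
  rewrite /vld iota_uniq size_iota eqxx /=; apply/allP => j; rewrite mem_iota; lia.
have [f0 [f0e f0S f0C]] := step2 x0 hp ht hn hQc hO2 hE' he vI0.
exists f0; split => // I vI.
have [I' [vI' d1 d2]] : exists I', [/\ vld n (t - 1) I', forall j, j \in I -> j \notin I'
    & forall j, j \in iota 0 (t - 1) -> j \notin I'].
  apply: avoid; move/and3P: vI => [_ /eqP -> _]; rewrite size_iota; lia.
have [f [fe fS fC]] := step2 x0 hp ht hn hQc hO2 hE' he vI.
have [g [ge gS gD]] := step2 x0 hp ht hn hQd hO1 hE he vI'.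
move/and3P: vI => [_ _ aI]; move/and3P: vI' => [_ _ aI']; move/and3P: vI0 => [_ _ aI0].
have e1 := fg hp hO1 fC gD fe ge fS gS aI aI' d1.
have e2 := fg hp hO1 f0C gD f0e ge f0S gS aI0 aI' d2.
by rewrite e2 -e1.
Qed.


Lemma U_eq (T : finType) (S1 S2 : nat -> {set T}) L :
  (forall j, j \in L -> S1 j = S2 j) -> U S1 L = U S2 L.
Proof.
move=> h; apply/setP => x; rewrite !inE; apply/hasP/hasP => [[j jL xj]|[j jL xj]]; exists j => //.
  by rewrite -h.
by rewrite h.
Qed.

Lemma U_mem (T : finType) (S : nat -> {set T}) L1 L2 : L1 =i L2 -> U S L1 = U S L2.
Proof.
move=> h; apply/setP => x; rewrite !inE; apply/hasP/hasP => [[j jL xj]|[j jL xj]]; exists j => //.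
  by rewrite -h.
by rewrite h.
Qed.

Lemma ext_seq (T : finType) (M : matroid T) t (s : seq {set T}) e f :
  1 <= t -> f != e -> (forall k, k < size s -> e \notin nth set0 s k) ->
  (forall k, k < size s -> f \notin nth set0 s k) ->
  pr (size s) (nth set0 s) -> ech (circuit M) t (size s) (nth set0 s) ->
  (forall I, vld (size s) (t - 1) I -> circuit M (f |: (e |: U (nth set0 s) I))) ->
  pr (size (rcons s [set e; f])) (nth set0 (rcons s [set e; f])) /\
  ech (circuit M) t (size (rcons s [set e; f])) (nth set0 (rcons s [set e; f])).
Proof.
move=> ht fe he hf hp hE hC; rewrite size_rcons; set n := size s.
have nthE : forall j, j < n -> nth set0 (rcons s [set e; f]) j = nth set0 s j.
  by move=> j jn; rewrite nth_rcons jn.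
have nthN : nth set0 (rcons s [set e; f]) n = [set e; f] by rewrite nth_rcons ltnn eqxx.
have disjN : forall j, j < n -> [disjoint [set e; f] & nth set0 s j].
  move=> j jn; rewrite disjoints_subset; apply/subsetP => x; rewrite !inE.
  by case/orP => /eqP ->; [exact: he | exact: hf].
split; first split.
- move=> i; rewrite ltnS leq_eqVlt => /orP[/eqP ->|iL]; last by rewrite nthE // hp.1.
  by rewrite nthN cards2 eq_sym fe.
- move=> i j; rewrite ltnS leq_eqVlt => /orP[/eqP ->|iL]; rewrite ltnS leq_eqVlt => /orP[/eqP ->|jL].
  + by rewrite eqxx.
  + by move=> _; rewrite nthN (nthE j jL); apply: disjN.
  + by move=> _; rewrite nthN (nthE i iL) disjoint_sym; apply: disjN.
  + by move=> ij; rewrite (nthE i iL) (nthE j jL); apply: hp.2.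
move=> J /and3P[uJ /eqP sJ aJ].
case: (boolP (n \in J)) => nJ.
  have -> : U (nth set0 (rcons s [set e; f])) J =
            U (nth set0 (rcons s [set e; f])) (n :: rem n J).
    by apply: U_mem; apply: perm_mem; apply: perm_to_rem.
  have hrem : forall j, j \in rem n J -> j < n.
    move=> j; rewrite (mem_rem_uniq _ uJ) inE => /andP[jn jJ].
    by move/allP: aJ => /(_ j jJ); rewrite ltnS leq_eqVlt (negbTE jn).
  rewrite U_cons nthN (@U_eq _ _ (nth set0 s)); last by move=> j /hrem; apply: nthE.
  have -> : [set e; f] :|: U (nth set0 s) (rem n J) = f |: (e |: U (nth set0 s) (rem n J)).
    by apply/setP => x; rewrite !inE; case: (x == e); case: (x == f); rewrite ?orbT.
  apply: hC; rewrite /vld rem_uniq // size_rem // sJ subn1 eqxx /=.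
  by apply/allP => j /hrem.
have aJ' : forall j, j \in J -> j < n.
  move=> j jJ; move/allP: aJ => /(_ j jJ); rewrite ltnS leq_eqVlt => /orP[/eqP ejn|] //.
  by move: nJ; rewrite -ejn jJ.
rewrite (@U_eq _ _ (nth set0 s)); last by move=> j /aJ'; apply: nthE.
apply: hE; rewrite /vld uJ sJ eqxx /=; apply/allP => j jJ; exact: aJ' j jJ.
Qed.


Lemma main_ind (T : finType) (x0 : T) (M : matroid T) t :
  2 <= t -> t2t_property M t -> forall k (s : seq {set T}),
  pr (size s) (nth set0 s) -> ech (circuit M) t (size s) (nth set0 s) ->
  4 * t - 3 <= size s -> #|~: U (nth set0 s) (iota 0 (size s))| <= k ->
  exists s', [/\ pr (size (s ++ s')) (nth set0 (s ++ s')),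
     ech (circuit M) t (size (s ++ s')) (nth set0 (s ++ s')) &
     U (nth set0 (s ++ s')) (iota 0 (size (s ++ s'))) = setT].
Proof.
move=> ht h2t; elim=> [|k IH] s hp hE hn hc.
  exists [::]; rewrite cats0; split => //; apply/eqP; rewrite eqEsubset subsetT /=; apply/subsetP => x _.
  apply/negPn/negP => xU; move: hc; rewrite leqn0 cards_eq0 => /eqP h.
  have : x \in ~: U (nth set0 s) (iota 0 (size s)) by rewrite inE xU.
  by rewrite h inE.
case: (pickP (mem (~: U (nth set0 s) (iota 0 (size s))))) => [e|hN]; last first.
  exists [::]; rewrite cats0; split => //; apply/eqP; rewrite eqEsubset subsetT /=; apply/subsetP => x _.
  by apply/negPn/negP => xU; move: (hN x); rewrite /= inE xU.
rewrite /= inE => eU.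
have he : forall k, k < size s -> e \notin nth set0 s k.
  move=> j jn; apply/negP => ej; move: eU; rewrite inE; apply/negP; rewrite negbK.
  by apply/hasP; exists j; rewrite ?mem_iota.
have [f [fe hf hC]] := ext_step x0 ht h2t hp hE hn he.
have [hp' hE'] := ext_seq (leq_trans (isT : 1 <= 2) ht) fe he hf hp hE hC.
have hlt : #|~: U (nth set0 (rcons s [set e; f])) (iota 0 (size (rcons s [set e; f])))|
           < #|~: U (nth set0 s) (iota 0 (size s))|.
  apply: proper_card; apply/properP; split.
    apply/subsetP => x; rewrite !inE; apply: contra => /hasP[j]; rewrite mem_iota /= => jn xj.
    apply/hasP; exists j; first by rewrite size_rcons mem_iota; lia.
    by rewrite nth_rcons jn.
  exists e; first by rewrite inE.
  rewrite !inE negbK; apply/hasP; exists (size s); first by rewrite size_rcons mem_iota; lia.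
  by rewrite nth_rcons ltnn eqxx !inE eqxx.
have hn' : 4 * t - 3 <= size (rcons s [set e; f]) by rewrite size_rcons; lia.
have [s'' [h1 h2 h3]] := IH _ hp' hE' hn' (leq_trans (leq_trans hlt hc) (leqnn _)).
  by exists ([set e; f] :: s''); rewrite -cat_rcons.
Qed.

Lemma ech_to (T : finType) (P : {set T} -> Prop) t (s : seq {set T}) :
  ech P t (size s) (nth set0 s) ->
  forall I : {set 'I_(size s)}, #|I| = t -> P (\bigcup_(i in I) nth set0 s i).
Proof.
move=> hE I cI.
have -> : \bigcup_(i in I) nth set0 s i = U (nth set0 s) (map val (enum I)).
  apply/setP => x; rewrite inE; apply/bigcupP/hasP => [[i iI xi]|[j /mapP[i iI ->] xi]].
    by exists (val i) => //; apply: map_f; rewrite mem_enum.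
  by exists i => //; rewrite -mem_enum.
apply: hE; rewrite /vld map_inj_uniq ?enum_uniq //=; last exact: val_inj.
rewrite size_map -cardE cI eqxx /=; apply/allP => j /mapP[i _ ->]; exact: ltn_ord.
Qed.

Lemma to_ech (T : finType) (P : {set T} -> Prop) t (s : seq {set T}) :
  (forall I : {set 'I_(size s)}, #|I| = t -> P (\bigcup_(i in I) nth set0 s i)) ->
  ech P t (size s) (nth set0 s).
Proof.
move=> hI J /and3P[uJ /eqP sJ aJ].
pose I := [set i : 'I_(size s) | val i \in J].
have mI : map val (enum I) =i J.
  move=> j; apply/mapP/idP => [[i]|jJ]; first by rewrite mem_enum inE => ? ->.
  have jn : j < size s by move/allP: aJ => /(_ j jJ).
  by exists (Ordinal jn); rewrite // mem_enum inE.
have cI : #|I| = t.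
  rewrite cardE -sJ -(size_map val); apply: perm_size; apply: uniq_perm => //.
  by rewrite map_inj_uniq ?enum_uniq //; exact: val_inj.
have := hI I cI.
suff -> : \bigcup_(i in I) nth set0 s i = U (nth set0 s) J by [].
apply/setP => x; rewrite inE; apply/bigcupP/hasP => [[i iI xi]|[j jJ xj]].
  by exists (val i) => //; rewrite -mI; apply: map_f; rewrite mem_enum.
have jn : j < size s by move/allP: aJ => /(_ j jJ).
by exists (Ordinal jn); rewrite // inE.
Qed.

Lemma covers_of (T : finType) (s : seq {set T}) :
  U (nth set0 s) (iota 0 (size s)) = setT -> covers_ground s.
Proof.
move=> h; rewrite /covers_ground bigcup_seq; apply/setP => x; rewrite inE.
have : x \in U (nth set0 s) (iota 0 (size s)) by rewrite h inE.
rewrite inE => /hasP[j]; rewrite mem_iota /= => jn xj.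
by apply/bigcupP; exists (nth set0 s j) => //; apply: mem_nth.
Qed.

Theorem lemma4p5 (T : finType) (M : matroid T) (t : nat) (s : seq {set T}) :
  2 <= t -> t2t_property M t -> echidna M t s -> 4 * t - 3 <= size s ->
  exists s' : seq {set T},
    [/\ size s <= size (s ++ s'), covers_ground (s ++ s'),
        echidna M t (s ++ s') & coechidna M t (s ++ s')].
Proof.
move=> ht h2t [h1 h2 h3] hn.
have s0 : 0 < size s by lia.
have [x0 _] : exists x0, x0 \in nth set0 s 0 by apply/card_gt0P; rewrite h1.
have hp : pr (size s) (nth set0 s) by split.
have hE := to_ech h3.
have [s' [hp' hE' hU]] := main_ind x0 ht h2t hp hE hn (leqnn _).
exists s'; split.
- by rewrite size_cat leq_addr.
- exact: covers_of.
- by split; [exact: hp'.1 | exact: hp'.2 | exact: ech_to].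
- have hQd : forall X : {set T}, #|X| = t -> exists D : {set T}, [/\ X \subset D, #|D| = 2 * t & cocircuit M D].
    by move=> X hX; exact: (h2t X hX).2.
  have hn' : 4 * t - 3 <= size (s ++ s') by rewrite size_cat; lia.
  have := step1 x0 hp' ht hn' hQd (fun C D hC hD => orth hC hD) hE'.
  by move=> hc; split; [exact: hp'.1 | exact: hp'.2 | exact: ech_to].
Qed.
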